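(* Let $t,k,n$ be positive integers with $2\le t\le k\le n$. Then there exists a left-compressed non-trivial $t$-intersecting family $\mathcal F\subseteq\binom{[n]}{k}$ whose codegree squared sum ${\rm co}_2(\mathcal F)$ is maximum among all non-trivial $t$-intersecting subfamilies of $\binom{[n]}{k}$.
   Context: A family is $t$-intersecting if any two members share at least $t$ elements; it is trivial if all members share $t$ common elements, non-trivial otherwise. ${\rm co}_2(\mathcal F)=\sum_{E\in\binom{[n]}{k-1}}d(E)^2$ with $d(E)=|\{F\in\mathcal F:E\subseteq F\}|$. Shift: $\delta_{ij}(A)=(A\setminus\{j\})\cup\{i\}$ if $j\in A$, $i\notin A$, $(A\setminus\{j\})\cup\{i\}\notin\mathcal F$, else $\delta_{ij}(A)=A$; $\Delta_{ij}(\mathcal F)=\{\delta_{ij}(A):A\in\mathcal F\}$; $\mathcal F$ is left-compressed if $\Delta_{ij}(\mathcal F)=\mathcal F$ for all $1\le i<j\le n$. *)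

(* Defs.v *)
(* Ground set [n] is 'I_n (elements 0..n-1, ordered as naturals). *)
From mathcomp Require Import all_boot.
Set Implicit Arguments. Unset Strict Implicit. Unset Printing Implicit Defensive.

Section Defs.
Variable n : nat.
Local Notation fam := {set {set 'I_n}}.

Definition k_uniform (k : nat) (F : fam) : Prop :=
  forall A, A \in F -> #|A| = k.

Definition t_intersecting (t : nat) (F : fam) : Prop :=
  forall A B, A \in F -> B \in F -> t <= #|A :&: B|.

Definition trivial_fam (t : nat) (F : fam) : Prop :=
  exists T : {set 'I_n}, #|T| = t /\ forall A, A \in F -> T \subset A.

Definition nontrivial_fam (t : nat) (F : fam) : Prop := ~ trivial_fam t F.

Definition codeg (F : fam) (E : {set 'I_n}) : nat := #|[set A in F | E \subset A]|.

Definition co2 (k : nat) (F : fam) : nat :=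
  \sum_(E : {set 'I_n} | #|E| == k.-1) codeg F E ^ 2.

Definition shift_set (F : fam) (i j : 'I_n) (A : {set 'I_n}) : {set 'I_n} :=
  if [&& j \in A, i \notin A & ((A :\ j) :|: [set i]) \notin F]
  then (A :\ j) :|: [set i] else A.

Definition shift_fam (F : fam) (i j : 'I_n) : fam :=
  [set shift_set F i j A | A in F].

Definition left_compressed (F : fam) : Prop :=
  forall i j : 'I_n, i < j -> shift_fam F i j = F.

End Defs.

(* Main.v *)
Require Import Defs.
From mathcomp Require Import all_boot zify.
From Stdlib Require Classical.
Set Implicit Arguments. Unset Strict Implicit. Unset Printing Implicit Defensive.

Section Basic.
Variable n : nat.
Implicit Types (F G : {set {set 'I_n}}) (A B C D E X Y S : {set 'I_n}).

Lemma ar3 (a b x y : nat) : a + y = b + x -> x < y -> a < b.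
Proof. lia. Qed.
Lemma ar4 t : 0 < t -> 1 + t.-1 = t.
Proof. lia. Qed.
Lemma ar5 (a b c k : nat) : a = 1 + b -> a = 1 + c -> c = k -> b = k.
Proof. lia. Qed.
Lemma ar6 (a b x y : nat) : a <= b -> b + y = a + x -> x < y -> False.
Proof. lia. Qed.
Lemma ar7 (a t k : nat) : t + a = k -> a = k - t.
Proof. lia. Qed.
Lemma ar8 (a t : nat) : 0 < t -> t <= a -> a <= t.-1 -> False.
Proof. lia. Qed.

Definition sw (i j : 'I_n) X := X :\ j :|: [set i].

Lemma in_sw i j X x : (x \in sw i j X) = (x == i) || ((x != j) && (x \in X)).
Proof. by rewrite /sw !inE orbC. Qed.

Lemma sum_sw (f : 'I_n -> nat) i j X : i != j -> i \notin X -> j \in X ->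
  \sum_(x in sw i j X) f x + f j = \sum_(x in X) f x + f i.
Proof.
move=> ij iX jX.
rewrite /sw setUC big_setU1 /=; last by rewrite !inE (negbTE iX) andbF.
rewrite (big_setD1 j jX) /= addnAC [RHS]addnAC [f i + f j]addnC; congr (_ + _); apply: eq_bigl => x; rewrite !inE.
Qed.

Lemma card_sumI S Y : #|S :&: Y| = \sum_(x in S) (x \in Y).
Proof.
rewrite -sum1_card (eq_bigl (fun x => (x \in S) && (x \in Y))); last by move=> x; rewrite !inE.
by rewrite big_mkcondr /=; apply: eq_bigr => x _; case: (x \in Y).
Qed.

Definition ci X Y := #|X :&: Y|.
Lemma ciC X Y : ci X Y = ci Y X.
Proof. by rewrite /ci setIC. Qed.

Lemma card_swI i j X Y : i != j -> i \notin X -> j \in X ->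
  ci (sw i j X) Y + (j \in Y) = ci X Y + (i \in Y).
Proof. by move=> *; rewrite /ci !card_sumI sum_sw. Qed.

Lemma card_sw i j X : i != j -> i \notin X -> j \in X -> #|sw i j X| = #|X|.
Proof.
move=> ij iX jX; have := card_swI setT ij iX jX.
by rewrite /ci !setIT !inE; move/eqP; rewrite eqn_add2r => /eqP.
Qed.

Definition wt X := \sum_(x in X) (x : nat).

Lemma wt_sw i j X : i != j -> i \notin X -> j \in X -> wt (sw i j X) + j = wt X + i.
Proof. by move=> *; rewrite /wt sum_sw. Qed.



Lemma tI t F : t_intersecting t F -> forall A B, A \in F -> B \in F -> t <= ci A B.
Proof. exact. Qed.
Lemma kU k F : k_uniform k F -> forall A, A \in F -> #|A| = k.
Proof. exact. Qed.

Section Shift.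
Variables (F : {set {set 'I_n}}) (i j : 'I_n).
Hypothesis ij : i != j.

Definition moved A := [&& j \in A, i \notin A & sw i j A \notin F].
Local Notation dl := (shift_set F i j).
Local Notation DF := (shift_fam F i j).

Lemma shiftE A : dl A = if moved A then sw i j A else A.
Proof. by []. Qed.

Lemma j_sw A : j \notin sw i j A.
Proof. by rewrite in_sw eqxx andFb orbF eq_sym. Qed.

Lemma i_sw A : i \in sw i j A.
Proof. by rewrite in_sw eqxx. Qed.

Lemma sw_inj A B : j \in A -> j \in B -> i \notin A -> i \notin B -> sw i j A = sw i j B -> A = B.
Proof.
move=> jA jB iA iB e; apply/setP => x.
have := congr1 (fun S => x \in S) e; rewrite /= !in_sw.
case: (eqVneq x i) => [->|xi]; first by rewrite (negbTE iA) (negbTE iB).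
case: (eqVneq x j) => [->|xj] //=; by rewrite jA jB.
Qed.

Lemma sh_inj : {in F &, injective dl}.
Proof.
move=> A B AF BF; rewrite !shiftE.
case mA: (moved A); case mB: (moved B) => //.
- move: mA mB => /and3P [jA iA _] /and3P [jB iB _]; exact: sw_inj.
- move: mA => /and3P [_ _ nF] e; by rewrite e BF in nF.
- move: mB => /and3P [_ _ nF] e; by rewrite -e AF in nF.
Qed.

Lemma shift_card_inv (P : pred {set 'I_n}) :
  {in F, forall A, P (dl A) = P A} ->
  #|[set B in DF | P B]| = #|[set A in F | P A]|.
Proof.
move=> HP.
have -> : [set B in DF | P B] = dl @: [set A in F | P A].
  apply/setP => B; rewrite inE; apply/andP/imsetP.
  - by case=> /imsetP [A AF ->] PB; exists A => //; rewrite inE AF -HP.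
  - case=> A; rewrite inE => /andP [AF PA] ->; split; first exact: imset_f.
    by rewrite HP.
rewrite card_in_imset //; move=> A B; rewrite !inE => /andP [AF _] /andP [BF _].
exact: sh_inj.
Qed.

Lemma card_shift_fam : #|DF| = #|F|.
Proof. exact: card_in_imset sh_inj. Qed.

Lemma shift_uniform k : k_uniform k F -> k_uniform k DF.
Proof.
move=> kF B /imsetP [A AF ->]; rewrite shiftE.
case mA: (moved A); last exact: kF.
move: mA => /and3P [jA iA _]; rewrite card_sw //; exact: kF.
Qed.

Lemma ar1 (a b t x y : nat) : a + x = b + y -> t <= b -> x <= y -> t <= a.
Proof. lia. Qed.
Lemma ar2 (a b c t : nat) : a + 1 = b -> c + 1 = b -> t <= c -> t <= a.
Proof. lia. Qed.

Lemma shift_int t : t_intersecting t F -> t_intersecting t DF.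
Proof.
move=> /tI tF B1 B2 /imsetP [A AF ->] /imsetP [B BF ->].
change (t <= ci (dl A) (dl B)); rewrite !shiftE.
have key : forall A B, A \in F -> B \in F -> moved A -> ~~ moved B ->
   t <= ci (sw i j A) B.
  move=> A0 B0 A0F B0F /and3P [jA iA nA] mB.
  have h := card_swI B0 ij iA jA.
  have t0 := tF _ _ A0F B0F.
  case jB: (j \in B0); case iB: (i \in B0); rewrite ?jB ?iB in h.
  - exact: ar1 h t0 _.
  - have swBF : sw i j B0 \in F by move: mB; rewrite /moved jB iB /= negbK.
    have h2 := card_swI A0 ij (negbT iB) jB.
    rewrite (negbTE iA) jA [ci B0 _]ciC [ci (sw i j B0) _]ciC in h2.
    exact: ar2 h h2 (tF _ _ A0F swBF).
  - exact: ar1 h t0 _.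
  - exact: ar1 h t0 _.
case mA: (moved A); case mB: (moved B).
- move: (mA) (mB) => /and3P [jA iA _] /and3P [jB iB _].
  have h1 := card_swI (sw i j B) ij iA jA.
  have h2 := card_swI A ij iB jB.
  rewrite (negbTE (j_sw B)) i_sw in h1; rewrite jA (negbTE iA) ciC [ci B A]ciC in h2.
  have t0 := tF _ _ AF BF.
  move: h1 h2 t0; clear; move=> h1 h2 t0; move: h1 h2 => /= h1 h2; lia.
- by apply: key => //; rewrite mB.
- by rewrite ciC; apply: key => //; rewrite mA.
- exact: tF.
Qed.

Lemma shift_id : {in F, forall A, ~~ moved A} -> DF = F.
Proof.
move=> H; rewrite /shift_fam (eq_in_imset (g := id)) ?imset_id //.
by move=> A AF; rewrite /= shiftE (negbTE (H A AF)).
Qed.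

Definition W G := \sum_(A in G) wt A.

Lemma exists_moved : DF != F -> exists2 A, A \in F & moved A.
Proof.
move=> ne; case: (pickP [pred A | (A \in F) && moved A]) => [A /andP [AF mA]|H].
  by exists A.
case/negP: ne; apply/eqP/shift_id => A AF; have := H A; rewrite /= AF /=.
by move=> ->.
Qed.

Lemma shift_weight : i < j -> DF != F -> W DF < W F.
Proof.
move=> lij ne; have [A0 A0F mA0] := exists_moved ne.
rewrite /W big_imset; last exact: sh_inj.
have le : forall A, wt (dl A) <= wt A.
  move=> A; rewrite shiftE; case mA: (moved A) => //.
  move: mA => /and3P [jA iA _]; exact: ltnW (ar3 (wt_sw ij iA jA) lij).
have lt : wt (dl A0) < wt A0.
  rewrite shiftE mA0; move: mA0 => /and3P [jA iA _]; exact: ar3 (wt_sw ij iA jA) lij.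
rewrite (bigD1 A0 A0F) [X in _ < X](bigD1 A0 A0F) /=.
have : \sum_(A in F | A != A0) wt (dl A) <= \sum_(A in F | A != A0) wt A.
  by apply: leq_sum => A _; exact: le.
by move=> h; rewrite -addSn; apply: leq_add.
Qed.

Lemma DF_j B : B \in DF -> j \in B -> (B \in F) && ~~ moved B.
Proof.
case/imsetP => A AF ->; rewrite shiftE; case mA: (moved A).
  by rewrite (negbTE (j_sw A)).
by rewrite AF mA.
Qed.

Lemma sub_sw E A : j \in A -> i \notin A -> j \in E -> i \notin E ->
  (sw i j E \subset sw i j A) = (E \subset A).
Proof.
move=> jA iA jE iE; apply/subsetP/subsetP => H x.
- move=> xE; case: (eqVneq x j) => [->//|xj].
  have : x \in sw i j E by rewrite in_sw xj xE orbT.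
  move/H; rewrite in_sw xj /=; case/orP => // /eqP xi; by rewrite -xi xE in iE.
- rewrite !in_sw; case/orP => [->//|/andP [xj xE]]; by rewrite H // xj orbT.
Qed.

Lemma sub_sw_i E A : i \notin A -> (sw i j E \subset A) = false.
Proof.
move=> iA; apply/negbTE; apply/negP => /subsetP H; by rewrite H ?i_sw in iA.
Qed.

Lemma sub_sw_j E A : j \in E -> (E \subset sw i j A) = false.
Proof.
move=> jE; apply/negbTE; apply/negP => /subsetP H; have := H j jE; by rewrite (negbTE (j_sw A)).
Qed.

Lemma codeg_pair E : j \in E -> i \notin E ->
  let a := codeg DF E in let b := codeg DF (sw i j E) in
  let c := codeg F E in let d := codeg F (sw i j E) in
  [/\ a + b = c + d, a <= c & a <= d].
Proof.
move=> jE iE /=; split.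
- rewrite /codeg.
  have UI : forall G, #|[set A in G | E \subset A]| + #|[set A in G | sw i j E \subset A]| =
     #|[set A in G | (E \subset A) || (sw i j E \subset A)]| +
     #|[set A in G | (E \subset A) && (sw i j E \subset A)]|.
    move=> G; rewrite -cardsUI; congr (_ + _); apply: eq_card => A; rewrite !inE;
    by case: (A \in G); case: (E \subset A); case: (sw i j E \subset A).
  rewrite !UI !shift_card_inv // => A AF; rewrite shiftE; case mA: (moved A) => //;
  move: mA => /and3P [jA iA _]; by rewrite sub_sw // sub_sw_j // sub_sw_i //= ?andbF ?orbF.
- apply: subset_leq_card; apply/subsetP => B; rewrite !inE => /andP [BD EB].
  have jB : j \in B by apply: (subsetP EB).
  by have /andP [-> _] := DF_j BD jB.
- pose phi B := if i \in B then B else sw i j B.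
  rewrite /codeg -(card_in_imset (f := phi)).
    apply: subset_leq_card; apply/subsetP => C /imsetP [B]; rewrite inE => /andP [BD EB] ->.
    have jB : j \in B by apply: (subsetP EB).
    have /andP [BF mB] := DF_j BD jB.
    rewrite /phi inE; case: (boolP (i \in B)) => iB.
      rewrite BF /=; apply/subsetP => x; rewrite in_sw; case/orP => [/eqP ->//|/andP [_ xE]].
      exact: (subsetP EB).
    move: mB; rewrite /moved jB iB /= negbK => ->; by rewrite sub_sw.
  move=> B1 B2; rewrite !inE => /andP [B1D EB1] /andP [B2D EB2].
  have jB1 : j \in B1 by apply: (subsetP EB1).
  have jB2 : j \in B2 by apply: (subsetP EB2).
  rewrite /phi; case: (boolP (i \in B1)) => iB1; case: (boolP (i \in B2)) => iB2 //.
  + move=> e; by rewrite e (negbTE (j_sw B2)) in jB1.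
  + move=> e; by rewrite -e (negbTE (j_sw B1)) in jB2.
  + exact: sw_inj.
Qed.

Lemma codeg_same E : (i \in E) = (j \in E) -> codeg DF E = codeg F E.
Proof.
move=> e; rewrite /codeg shift_card_inv // => A AF; rewrite shiftE.
case mA: (moved A) => //; move: mA => /and3P [jA iA _].
case: (boolP (j \in E)) => jE.
  rewrite sub_sw_j //; apply/esym/negbTE/negP => /subsetP H.
  by rewrite H // e in iA.
apply/subsetP/subsetP => H x xE; have := H x xE.
- have xj : x != j by apply/eqP => xj; move: jE; rewrite -xj xE.
  have xi : x != i by apply/eqP => xi; move: jE; rewrite -e -xi xE.
  by rewrite in_sw (negbTE xi) xj.
- have xj : x != j by apply/eqP => xj; move: jE; rewrite -xj xE.
  have xi : x != i by apply/eqP => xi; move: jE; rewrite -e -xi xE.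
  by rewrite in_sw (negbTE xi) xj => ->.
Qed.

End Shift.

Section Tau.
Variables (i j : 'I_n).
Hypothesis ij : i != j.
Definition tp (x : 'I_n) := if x == i then j else if x == j then i else x.
Lemma tpK : involutive tp.
Proof.
have ji : (j == i) = false by rewrite eq_sym (negbTE ij).
move=> x; rewrite /tp; case: (eqVneq x i) => [->|xi]; first by rewrite eqxx ji ?eqxx.
case: (eqVneq x j) => [->|xj]; first by rewrite eqxx.
by rewrite (negbTE xi) (negbTE xj).
Qed.
Definition tau E := [set x | tp x \in E].
Lemma tauK : involutive tau.
Proof. by move=> E; apply/setP => x; rewrite !inE tpK. Qed.
Lemma card_tau E : #|tau E| = #|E|.
Proof. exact: card_preimset (inv_inj tpK). Qed.
Lemma tau_sw E : j \in E -> i \notin E -> tau E = sw i j E.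
Proof.
move=> jE iE; apply/setP => x; rewrite inE in_sw /tp.
case: (eqVneq x i) => [->|xi] //=; case: (eqVneq x j) => [->|xj] //=; exact/negbTE.
Qed.
Lemma tau_same E : (i \in E) = (j \in E) -> tau E = E.
Proof.
move=> e; apply/setP => x; rewrite inE /tp.
case: (eqVneq x i) => [->|xi] //=; case: (eqVneq x j) => [->|xj] //=.
Qed.
End Tau.

Lemma sq_ineq a b c d : a + b = c + d -> a <= c -> a <= d -> c ^ 2 + d ^ 2 <= a ^ 2 + b ^ 2.
Proof. move=> *; nia. Qed.

Lemma co2_shift k F i j : i != j -> co2 k F <= co2 k (shift_fam F i j).
Proof.
move=> ij.
have dbl : forall G, (co2 k G).*2 = \sum_(E : {set 'I_n} | #|E| == k.-1) (codeg G E ^ 2 + codeg G (tau i j E) ^ 2).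
  move=> G; rewrite big_split /= -addnn; congr (_ + _).
  rewrite /co2 (reindex_inj (inv_inj (tauK ij))) /=; apply: eq_bigl => E.
  by rewrite card_tau.
rewrite -leq_double !dbl; apply: leq_sum => E _.
case: (boolP ((j \in E) && (i \notin E))) => [/andP [jE iE]|h1].
  rewrite tau_sw //; have [? ? ?] := codeg_pair F ij jE iE; exact: sq_ineq.
case: (boolP ((i \in E) && (j \notin E))) => [/andP [iE jE]|h2].
  have ji : (j == i) = false by rewrite eq_sym (negbTE ij).
  have jE0 : j \in tau i j E by rewrite inE /tp ji eqxx.
  have iE0 : i \notin tau i j E by rewrite inE /tp eqxx.
  have := codeg_pair F ij jE0 iE0; rewrite -tau_sw // tauK //= => -[? ? ?].
  rewrite addnC [X in _ <= X]addnC; exact: sq_ineq.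
have e : (i \in E) = (j \in E).
  move: h1 h2; case: (i \in E); case: (j \in E) => //.
by rewrite tau_same // !codeg_same.
Qed.


Lemma codeg_mono (G H : {set {set 'I_n}}) E : G \subset H -> codeg G E <= codeg H E.
Proof.
move=> /subsetP GH; apply: subset_leq_card; apply/subsetP => A; rewrite !inE.
by case/andP => /GH -> ->.
Qed.

Lemma co2_mono k (G H : {set {set 'I_n}}) : G \subset H -> co2 k G <= co2 k H.
Proof.
by move=> GH; apply: leq_sum => E _; rewrite leq_sqr codeg_mono.
Qed.

Lemma co2_add k F D : 0 < k -> #|D| = k -> D \notin F -> co2 k F < co2 k (D |: F).
Proof.
move=> k0 cD DF.
have : 0 < #|D| by rewrite cD.
case/card_gt0P => x xD.
set E0 := D :\ x.
have cE0 : #|E0| == k.-1 by rewrite /E0 -cD (cardsD1 x D) xD.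
have e0 : codeg (D |: F) E0 = (codeg F E0).+1.
  rewrite /codeg.
  have -> : [set A in D |: F | E0 \subset A] = D |: [set A in F | E0 \subset A].
    apply/setP => A; rewrite !inE; case: (eqVneq A D) => [->|] //=.
    by rewrite subD1set.
  by rewrite cardsU1 inE (negbTE DF).
rewrite /co2 (bigD1 E0 cE0) [X in _ < X](bigD1 E0 cE0) /= e0.
have : \sum_(E : {set 'I_n} | (#|E| == k.-1) && (E != E0)) codeg F E ^ 2 <=
       \sum_(E : {set 'I_n} | (#|E| == k.-1) && (E != E0)) codeg (D |: F) E ^ 2.
  apply: leq_sum => E _; rewrite leq_sqr codeg_mono //; exact: subsetUr.
move=> h; rewrite -addSn; apply: leq_add => //.
by rewrite ltn_sqr.
Qed.

Lemma core_not_i F i j (T : {set 'I_n}) : (forall B, B \in shift_fam F i j -> T \subset B) -> i \notin T ->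
  forall A, A \in F -> T \subset A.
Proof.
move=> HT iT A AF; have := HT _ (imset_f _ AF); rewrite shiftE.
case mA: (moved F i j A) => //; move/subsetP => H; apply/subsetP => x xT.
have := H x xT; rewrite in_sw; case/orP => [/eqP xi|/andP [_ //]].
by move: iT; rewrite -xi xT.
Qed.

Lemma exists_min (T : Type) (P : T -> Prop) (mu : T -> nat) :
  (exists x, P x) -> exists x, P x /\ forall y, P y -> mu x <= mu y.
Proof.
case=> x Px; suff: forall m x, mu x <= m -> P x -> exists x, P x /\ forall y, P y -> mu x <= mu y.
  by move=> /(_ (mu x) x (leqnn _) Px).
elim=> [|m IH] {}x le {}Px.
  exists x; split => // y _; by move: le; rewrite leqn0 => /eqP ->.
case: (Classical_Prop.classic (exists y, P y /\ mu y < mu x)) => [[y [Py lt]]|H].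
  apply: (IH y) => //; by rewrite -ltnS (leq_trans lt le).
exists x; split => // y Py; rewrite leqNgt; apply/negP => lt; apply: H; by exists y.
Qed.


Section Stuck.
Variables (t k : nat) (F : {set {set 'I_n}}).
Hypotheses (t1 : 0 < t) (kF : k_uniform k F) (tF : t_intersecting t F) (ntF : nontrivial_fam t F).
Hypothesis Hmax : forall D : {set 'I_n}, #|D| = k -> (forall B, B \in F -> t <= ci D B) -> D \in F.
Hypothesis Hgood : forall x y : 'I_n, x < y -> shift_fam F x y != F -> trivial_fam t (shift_fam F x y).

Lemma ntF' (T : {set 'I_n}) : #|T| = t -> (forall A, A \in F -> T \subset A) -> False.
Proof. move=> cT H; apply: ntF; by exists T. Qed.

Lemma stuck (i j : 'I_n) : i < j -> shift_fam F i j != F -> False.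
Proof.
move=> lij ne.
have ij : i != j by apply/eqP => e; rewrite e ltnn in lij.
have [T [cT HT]] := Hgood lij ne.
have iT : i \in T.
  apply/negPn/negP => iT; exact: (ntF' cT (core_not_i HT iT)).
have jT : j \notin T.
  apply/negP => jT; move/negP: ne; apply; apply/eqP/shift_id => A AF.
  apply/negP => mA; have := HT _ (imset_f _ AF); rewrite shiftE mA => /subsetP /(_ j jT).
  by rewrite in_sw eqxx /= orbF eq_sym (negbTE ij).
set T0 := T :\ i.
have TE : T = i |: T0 by rewrite setD1K.
have cT0 : #|T0| = t.-1 by move: cT; rewrite (cardsD1 i T) iT add1n => <-.
have iT0 : i \notin T0 by rewrite !inE eqxx.
have jT0 : j \notin T0 by rewrite !inE negb_and jT orbT.
have hF : forall A, A \in F -> [/\ T0 \subset A, (i \in A) || (j \in A) &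
                                  (j \in A -> i \notin A -> sw i j A \notin F)].
  move=> A AF; have := HT _ (imset_f _ AF); rewrite shiftE; case mA: (moved F i j A).
  - move: mA => /and3P [jA iA nA] /subsetP H; split => //; last by rewrite jA orbT.
    apply/subsetP => x x0.
    have /andP [xi xT] : (x != i) && (x \in T) by move: x0; rewrite !inE.
    by have := H x xT; rewrite in_sw (negbTE xi) => /andP [].
  - move=> /subsetP H; have iA := H i iT; split.
    + apply/subsetP => x; rewrite !inE => /andP [_ xT]; exact: H.
    + by rewrite iA.
    + by move=> _; rewrite iA.
have cl : forall l, l \notin T0 -> #|l |: T0| = t.
  by move=> l lT0; rewrite cardsU1 lT0 cT0 ar4.
have [A0 A0F /andP [iA0 jA0]] : exists2 A, A \in F & (i \in A) && (j \notin A).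
  apply: Classical_Prop.NNPP => H; apply: (ntF' (T := j |: T0)); first exact: cl.
  move=> A AF; have [s0 ij0 _] := hF A AF; apply/subsetP => x; rewrite in_setU1.
  case/orP => [/eqP ->|]; last exact: (subsetP s0).
  case/orP: ij0 => // iA; apply/negPn/negP => njA; apply: H; exists A => //.
  by rewrite iA njA.
have [C0 C0F /andP [jC0 iC0]] : exists2 C, C \in F & (j \in C) && (i \notin C).
  apply: Classical_Prop.NNPP => H; apply: (ntF' cT) => A AF; have [s0 ij0 _] := hF A AF.
  rewrite TE; apply/subsetP => x; rewrite in_setU1.
  case/orP => [/eqP ->|]; last exact: (subsetP s0).
  apply/negPn/negP => niA; apply: H; exists A => //.
  by move: ij0; rewrite (negbTE niA) /= => ->.
have [C [[CF jC iC] minC]] := exists_min (P := fun Z => [/\ Z \in F, j \in Z & i \notin Z]) wt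
   (ex_intro _ C0 (And3 C0F jC0 iC0)).
have [A [[AF iA jA] minA]] := exists_min (P := fun Z => [/\ Z \in F, i \in Z & j \notin Z]) wt
   (ex_intro _ A0 (And3 A0F iA0 jA0)).
set U := T0 :|: [set i; j].
have inU : forall x, (x \in U) = [|| x \in T0, x == i | x == j] by move=> x; rewrite !inE.
have inU' : forall x, (x \in U) = [|| x \in T0, x == j | x == i].
  by move=> x; rewrite inU; case: (x == i); case: (x == j); rewrite ?orbT ?orbF.
have coreU : forall D', (forall u, u \in U -> u \in D') -> forall B, B \in F -> t <= ci D' B.
  move=> D' UD B BF; have [T0B ijB _] := hF B BF.
  have [l [lB lU lT0]] : exists l, [/\ l \in B, l \in U & l \notin T0].
    case/orP: ijB => [iB|jB]; [exists i | exists j]; by split; rewrite // inU eqxx ?orbT.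
  rewrite /ci -(cl l lT0); apply: subset_leq_card.
  apply/subsetP => x; rewrite in_setU1 ?in_setI => /orP [/eqP ->|x0]; apply/andP; split => //.
  - exact: UD.
  - by apply: UD; rewrite inU x0.
  - exact: (subsetP T0B).
have down : forall Z a o, Z \in F -> a \in Z -> o \notin Z ->
    (forall x, (x \in U) = [|| x \in T0, x == a | x == o]) ->
    (forall Z', Z' \in F -> a \in Z' -> o \notin Z' -> wt Z <= wt Z') ->
    forall x y : 'I_n, y \in Z -> y \notin U -> x \notin Z -> x \notin U -> x < y -> False.
  move=> Z a o ZF aZ oZ hU minZ x y yZ yU xZ xU lxy.
  have [T0Z _ _] := hF Z ZF.
  have oU : o \in U by rewrite hU eqxx !orbT.
  have aU : a \in U by rewrite hU eqxx !orbT.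
  have xo : x != o by apply/eqP => e; move: xU; rewrite e oU.
  have eq : shift_fam F x y = F.
    apply/eqP; apply/negPn/negP => ne'.
    have [T' [cT' HT']] := Hgood lxy ne'.
    have xT' : x \in T'.
      apply/negPn/negP => xT'; exact: (ntF' cT' (core_not_i HT' xT')).
    pose D := (o |: Z) :\ y.
    have xD : x \notin D by rewrite !inE (negbTE xo) (negbTE xZ) andbF.
    have UD : forall u, u \in U -> u \in D.
      move=> u uU; rewrite !inE.
      have uy : u != y by apply/eqP => e; move: yU; rewrite -e uU.
      rewrite uy /=; move: uU; rewrite hU => /or3P [u0|/eqP ->|/eqP ->].
      - by rewrite (subsetP T0Z u u0) orbT.
      - by rewrite aZ orbT.
      - by rewrite eqxx.
    have h1 : #|o |: Z| = 1 + #|D| by rewrite (cardsD1 y (o |: Z)) in_setU1 yZ orbT.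
    have h2 : #|o |: Z| = 1 + #|Z| by rewrite cardsU1 oZ.
    have cD : #|D| = k := ar5 h1 h2 (kU kF ZF).
    have DF : D \in F by apply: Hmax cD _; exact: coreU.
    have yD : y \notin D by rewrite !inE eqxx.
    have DD : D \in shift_fam F x y.
      have <- : shift_set F x y D = D by rewrite shiftE /moved (negbTE yD).
      exact: imset_f.
    have := HT' _ DD => /subsetP /(_ x xT'); by rewrite (negbTE xD).
  have Z'F : sw x y Z \in F.
    apply/negPn/negP => nZ'; have := imset_f (shift_set F x y) ZF.
    rewrite -/(shift_fam F x y) eq shiftE /moved yZ xZ nZ' /= => h.
    by rewrite h in nZ'.
  have xy : x != y by apply/eqP => e; move: lxy; rewrite e ltnn.
  have wlt := wt_sw xy xZ yZ.
  have ay : a != y by apply/eqP => e; move: yU; rewrite -e aU.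
  have ox : o != x by rewrite eq_sym.
  have := minZ _ Z'F; rewrite !in_sw ay aZ (negbTE ox) (negbTE oZ) orbT andbF /=.
  move=> /(_ isT isT) le; exact: ar6 le wlt lxy.
have downC := down C j i CF jC iC inU' (fun Z' Z'F jZ iZ => minC Z' (And3 Z'F jZ iZ)).
have downA := down A i j AF iA jA inU (fun Z' Z'F iZ jZ => minA Z' (And3 Z'F iZ jZ)).
have cap : forall Z a o, Z \in F -> a \in Z -> o \notin Z -> a \notin T0 -> o \notin T0 ->
    (forall x, (x \in U) = [|| x \in T0, x == a | x == o]) -> #|Z :\: U| = k - t.
  move=> Z a o ZF aZ oZ aT0 oT0 hU; have [T0Z _ _] := hF Z ZF.
  have e : #|Z :&: U| = t.
    rewrite -(cl a aT0); apply: eq_card => x; rewrite in_setI hU in_setU1.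
    case: (eqVneq x a) => [->|xa]; first by rewrite aZ orbT.
    case: (eqVneq x o) => [->|xo]; first by rewrite (negbTE oZ) (negbTE oT0).
    rewrite !orbF /=; case x0 : (x \in T0); last by rewrite andbF.
    by rewrite (subsetP T0Z x x0).
  have := cardsID U Z; rewrite e (kU kF ZF); exact: ar7.
have cC := cap C j i CF jC iC jT0 iT0 inU'.
have cA := cap A i j AF iA jA iT0 jT0 inU.
have AsubC : forall z, z \in A -> z \notin U -> z \in C.
  move=> z zA zU; apply/negPn/negP => zC.
  have : ~~ (C :\: U \subset A :\: U).
    apply/negP => sub; have : C :\: U == A :\: U by rewrite eqEcard sub /=; exact: (eq_leq (etrans cA (esym cC))).
    move/eqP => e; have : z \in A :\: U by rewrite in_setD zU zA.
    by rewrite -e in_setD (negbTE zC) andbF.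
  case/subsetPn => w; rewrite !in_setD => /andP [wU wC]; rewrite wU /= => wA.
  case: (ltngtP z w) => [lt|lt|e].
  - exact: (downC z w wC wU zC zU lt).
  - exact: (downA w z zA zU wA wU lt).
  - by move: zC; rewrite (val_inj e) wC.
have nD' : sw i j C \notin F by have [_ _ h] := hF C CF; exact: h.
have cD' : #|sw i j C| = k by rewrite card_sw // (kU kF CF).
have [B BF lt] : exists2 B, B \in F & ci (sw i j C) B < t.
  apply: Classical_Prop.NNPP => H; move/negP: nD'; apply; apply: Hmax; [exact: cD' | move=> B BF].
  rewrite leqNgt; apply/negP => lt; apply: H; by exists B.
have [T0B ijB _] := hF B BF.
have [T0C _ _] := hF C CF.
have T0D : forall x, x \in T0 -> x \in sw i j C.
  move=> x x0; rewrite in_sw (subsetP T0C x x0) andbT.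
  have -> : x != j by apply/eqP => e; move: jT0; rewrite -e x0.
  by rewrite orbT.
have iB : i \notin B.
  apply/negP => iB; move: lt; rewrite ltnNge => /negP; apply.
  rewrite /ci -(cl i iT0); apply: subset_leq_card; apply/subsetP => x.
  rewrite in_setU1 ?in_setI => /orP [/eqP ->|x0]; first by rewrite i_sw iB.
  by rewrite T0D // (subsetP T0B x x0).
have noCB : forall z, z \in C -> z \in B -> z \notin U -> False.
  move=> z zC zB zU; move: lt; rewrite ltnNge => /negP; apply.
  have zT0 : z \notin T0 by move: zU; rewrite inU negb_or => /andP [].
  rewrite /ci -(cl z zT0); apply: subset_leq_card; apply/subsetP => x.
  rewrite in_setU1 ?in_setI => /orP [/eqP ->|x0]; last by rewrite T0D // (subsetP T0B x x0).
  have zj : z != j by apply/eqP => e; move: zU; rewrite e inU eqxx !orbT.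
  by rewrite in_sw zj zC zB orbT.
have : ci A B <= #|T0|.
  rewrite /ci; apply: subset_leq_card; apply/subsetP => x; rewrite inE => /andP [xA xB].
  case xU : (x \in U).
    move: xU; rewrite inU => /or3P [//|/eqP e|/eqP e].
    - by move: iB; rewrite -e xB.
    - by move: jA; rewrite -e xA.
  by case: (noCB x (AsubC x xA (negbT xU)) xB (negbT xU)).
rewrite cT0 => le; exact: ar8 t1 (tI tF AF BF) le.
Qed.

End Stuck.

End Basic.
Lemma ar9 (a b B : nat) : a <= B -> b <= B -> B - b <= B - a -> a <= b.
Proof. lia. Qed.
Lemma ar10 (a b : nat) : a <= b -> b < a -> False.
Proof. lia. Qed.

Theorem corollary2p5 (t k n : nat) :
  2 <= t -> t <= k -> k <= n ->
  (exists G : {set {set 'I_n}},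
      k_uniform k G /\ t_intersecting t G /\ nontrivial_fam t G) ->
  exists F : {set {set 'I_n}},
    [/\ k_uniform k F, t_intersecting t F, nontrivial_fam t F,
        left_compressed F &
        forall G : {set {set 'I_n}},
          k_uniform k G -> t_intersecting t G -> nontrivial_fam t G ->
          co2 k G <= co2 k F].
Proof.
move=> t2 tk kn [G0 [kG0 [tG0 nG0]]].
pose P := fun G : {set {set 'I_n}} => [/\ k_uniform k G, t_intersecting t G & nontrivial_fam t G].
pose Bc := co2 k [set: {set 'I_n}].
have bnd : forall G : {set {set 'I_n}}, co2 k G <= Bc by move=> G; rewrite /Bc; apply: co2_mono; apply: subsetT.
have [F1 [PF1 minF1]] := exists_min (P := P) (fun G => Bc - co2 k G)
  (ex_intro _ G0 (And3 kG0 tG0 nG0)).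
have max1 : forall G : {set {set 'I_n}}, P G -> co2 k G <= co2 k F1.
  by move=> G PG; exact: ar9 (bnd G) (bnd F1) (minF1 G PG).
have [F [[PF eF] minF]] := exists_min (P := fun G => P G /\ co2 k G = co2 k F1) (@W n)
  (ex_intro _ F1 (conj PF1 erefl)).
have maxF : forall G : {set {set 'I_n}}, P G -> co2 k G <= co2 k F by move=> G PG; rewrite eF; exact: max1.
case: PF => kF tF nF.
have t1 : 0 < t by apply: leq_trans t2.
have k0 : 0 < k by apply: leq_trans t1 tk.
have Hgood : forall x y : 'I_n, x < y -> shift_fam F x y != F -> trivial_fam t (shift_fam F x y).
  move=> x y lxy ne; apply: Classical_Prop.NNPP => ntD.
  have xy : x != y by apply/eqP => e; move: lxy; rewrite e ltnn.
  have PD : P (shift_fam F x y) := And3 (shift_uniform xy kF) (shift_int xy tF) ntD.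
  have e : co2 k (shift_fam F x y) = co2 k F1.
    by apply/eqP; rewrite eqn_leq max1 //= -eF co2_shift.
  exact: ar10 (minF _ (conj PD e)) (shift_weight xy lxy ne).
have Hmax : forall D : {set 'I_n}, #|D| = k -> (forall B, B \in F -> t <= ci D B) -> D \in F.
  move=> D cD HD; apply/negPn/negP => nD.
  have PG : P (D |: F).
    split.
    - move=> A; rewrite in_setU1 => /orP [/eqP ->|AF]; [exact: cD | exact: kF].
    - move=> A B; rewrite !in_setU1 => /orP [/eqP ->|AF] /orP [/eqP ->|BF].
      + by change (t <= ci D D); rewrite /ci setIid cD.
      + exact: HD.
      + change (t <= ci A D); rewrite ciC; exact: HD.
      + exact: tF.
    - move=> [T [cT HT]]; apply: nF; exists T; split => // A AF; apply: HT.
      by rewrite in_setU1 AF orbT.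
  exact: ar10 (maxF _ PG) (co2_add k0 cD nD).
exists F; split => //.
move=> i j lij; apply/eqP; apply/negPn/negP => ne.
exact: (stuck t1 kF tF nF Hmax Hgood lij ne).
by move=> G kG tG nG; apply: maxF.
Qed.
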